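(* Let $U$ be the $4\times 15$ matrix over $\mathbb{F}_2$ whose columns are all $15$ nonzero vectors of $\mathbb{F}_2^4$, let $B_1=I_4$ and $B_2=\operatorname{diag}\!\left(\begin{bmatrix}0&1\\1&0\end{bmatrix},\begin{bmatrix}0&1\\1&0\end{bmatrix}\right)$, and let $F2R4A=\Gamma(U^tB_1U)$ and $F2R4B=\Gamma(U^tB_2U)$. Then a simple graph $G$ satisfies $\operatorname{mr}(\mathbb{F}_2,G)\le4$ if and only if $G$ is a blowup of $F2R4A\cup K_1$ or of $F2R4B\cup K_1$, where $K_1$ is a single isolated nonlooped vertex.
   Context: For a symmetric $n\times n$ matrix $A$, the looped graph corresponding to $A$, $\Gamma(A)$, has vertex set $\{1,\dots,n\}$, an edge $ij$ ($i\neq j$) iff $a_{ij}\neq0$, and a loop at $i$ iff $a_{ii}\ne 0$. For a simple graph $G$, $\operatorname{mr}(F,G)$ is the minimum rank of a symmetric matrix $A$ over $F$ with $a_{ij}\neq0$ for $i\ne j$ iff $ij$ is an edge of $G$ (diagonal unrestricted). A blowup of a looped graph $G$ with vertices $v_1,\dots,v_n$ is a simple graph obtained by replacing each nonlooped vertex $v_i$ by a (possibly empty) independent set $V_i$, each looped vertex $v_i$ by a (possibly empty) clique $V_i$, and each edge $v_iv_j$ ($i\ne j$) by all edges $xy$ with $x\in V_i$, $y\in V_j$. *)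

(* Defs.v *)
From HB Require Import structures.
From mathcomp Require Import all_boot all_order all_algebra.
Set Implicit Arguments. Unset Strict Implicit. Unset Printing Implicit Defensive.
Import Order.TTheory GRing.Theory Num.Theory.
Local Open Scope ring_scope.

(* A simple graph on 'I_n is a symmetric irreflexive relation g.
   A looped graph on a vertex type V is a symmetric relation h; h v v means
   there is a loop at v. *)

Definition fits (F : finFieldType) (n : nat) (g : rel 'I_n) (A : 'M[F]_n) : bool :=
  (A^T == A) && [forall i : 'I_n, forall j : 'I_n, (i != j) ==> ((A i j != 0) == g i j)].

(* minimum rank mr(F,G); the default n is never attained below since
   every simple graph has a fitting matrix of rank <= n. *)
Definition mr (F : finFieldType) (n : nat) (g : rel 'I_n) : nat :=
  \big[minn/n]_(A : 'M[F]_n | fits g A) \rank A.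

Definition Gamma (F : fieldType) (m : nat) (A : 'M[F]_m) : rel 'I_m :=
  fun i j => A i j != 0.

(* G (simple graph on 'I_n) is a blowup of the looped graph h on V:
   vertex x of G lies in part V_(f x). *)
Definition blowup (V : Type) (h : rel V) (n : nat) (g : rel 'I_n) : Prop :=
  exists f : 'I_n -> V, forall x y : 'I_n, x != y -> g x y = h (f x) (f y).

(* disjoint union with K_1, a single isolated nonlooped vertex (None) *)
Definition withK1 (V : Type) (h : rel V) : rel (option V) :=
  fun x y => match x, y with Some a, Some b => h a b | _, _ => false end.

(* U : columns are all 15 nonzero vectors of F_2^4; column j is the binary
   expansion of j+1 (row i = bit i). *)
Definition Umx : 'M['F_2]_(4, 15) :=
  \matrix_(i < 4, j < 15) (odd ((j.+1) %/ 2 ^ i))%:R.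

Definition B1 : 'M['F_2]_4 := 1%:M.

(* B2 = diag([[0,1],[1,0]], [[0,1],[1,0]]) *)
Definition B2 : 'M['F_2]_4 :=
  \matrix_(i < 4, j < 4) ((i != j :> nat) && (i %/ 2 == j %/ 2)%N)%:R.

Definition F2R4A : rel 'I_15 := Gamma (Umx^T *m B1 *m Umx).
Definition F2R4B : rel 'I_15 := Gamma (Umx^T *m B2 *m Umx).

(* Main.v *)
Require Import Defs.
From HB Require Import structures.
From mathcomp Require Import all_boot all_order all_algebra.
Set Implicit Arguments. Unset Strict Implicit. Unset Printing Implicit Defensive.
Import Order.TTheory GRing.Theory Num.Theory.

Definition vec := (bool * bool * bool * bool)%type.
Definition v4 (p : vec) (k : nat) : bool :=
  let '(a,b,c,d) := p in match k with 0 => a | 1 => b | 2 => c | _ => d end.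

Definition F (u : nat -> bool) (m : nat -> nat -> bool) (v : nat -> bool) (i j : nat) : nat :=
  u i * m i j * v j.
Definition bilf (m : nat -> nat -> bool) (u v : nat -> bool) : bool :=
  odd (
   (F u m v 0 0 + F u m v 1 0 + F u m v 2 0 + F u m v 3 0) +
   (F u m v 0 1 + F u m v 1 1 + F u m v 2 1 + F u m v 3 1) +
   (F u m v 0 2 + F u m v 1 2 + F u m v 2 2 + F u m v 3 2) +
   (F u m v 0 3 + F u m v 1 3 + F u m v 2 3 + F u m v 3 3)).

Definition msym (b00 b01 b02 b03 b11 b12 b13 b22 b23 b33 : bool) (i j : nat) : bool :=
  match i, j with
  | 0,0 => b00 | 0,1 => b01 | 1,0 => b01 | 0,2 => b02 | 2,0 => b02 | 0,3 => b03 | 3,0 => b03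
  | 1,1 => b11 | 1,2 => b12 | 2,1 => b12 | 1,3 => b13 | 3,1 => b13
  | 2,2 => b22 | 2,3 => b23 | 3,2 => b23 | 3,3 => b33 | _,_ => false end.

Definition Bm (b : bool) : nat -> nat -> bool :=
  if b then msym true false false false true false false true false true
  else msym false true false false false false false false true false.

Definition all16 : seq vec :=
  let bs := [:: false; true] in
  flatten [seq flatten [seq [seq (a,b,c,d) | a <- bs, b <- bs] | c <- bs] | d <- bs].

Definition vadd (p q : vec) : vec :=
  let '(a,b,c,d) := p in let '(a',b',c',d') := q in (a (+) a', b (+) b', c (+) c', d (+) d').
Definition vzero : vec := (false,false,false,false).
Definition vsc (x : bool) (p : vec) : vec := if x then p else vzero.
Definition applyL (l0 l1 l2 l3 : vec) (p : vec) : vec :=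
  let '(a,b,c,d) := p in vadd (vadd (vadd (vsc a l0) (vsc b l1)) (vsc c l2)) (vsc d l3).

Definition ev k : vec := match k with 0 => (true,false,false,false) | 1 => (false,true,false,false)
  | 2 => (false,false,true,false) | _ => (false,false,false,true) end.

Fixpoint firsto {A B : Type} (f : A -> option B) (s : seq A) : option B :=
  match s with [::] => None | x :: s' => match f x with Some y => Some y | None => firsto f s' end end.

Definition search (m : nat -> nat -> bool) : option (bool * vec * vec * vec * vec) :=
  let bf b l l' := bilf (Bm b) (v4 l) (v4 l') in
  firsto (fun b =>
  firsto (fun l0 => if bf b l0 l0 == m 0 0 then
  firsto (fun l1 => if (bf b l1 l1 == m 1 1) && (bf b l0 l1 == m 0 1) then
  firsto (fun l2 => if [&& bf b l2 l2 == m 2 2, bf b l0 l2 == m 0 2 & bf b l1 l2 == m 1 2] then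
  firsto (fun l3 => if [&& bf b l3 l3 == m 3 3, bf b l0 l3 == m 0 3, bf b l1 l3 == m 1 3 & bf b l2 l3 == m 2 3]
     then Some (b,l0,l1,l2,l3) else None) all16 else None) all16 else None) all16 else None) all16) [:: true; false].

Definition checkm (m : nat -> nat -> bool) : bool :=
  if search m is Some (b,l0,l1,l2,l3) then
    all (fun p => all (fun q => bilf m (v4 p) (v4 q) == bilf (Bm b) (v4 (applyL l0 l1 l2 l3 p)) (v4 (applyL l0 l1 l2 l3 q))) all16) all16
  else false.

Definition all2 (P : bool -> bool) := P true && P false.
Definition checkall : bool :=
  all2 (fun b00 => all2 (fun b01 => all2 (fun b02 => all2 (fun b03 => all2 (fun b11 =>
  all2 (fun b12 => all2 (fun b13 => all2 (fun b22 => all2 (fun b23 => all2 (fun b33 =>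
   checkm (msym b00 b01 b02 b03 b11 b12 b13 b22 b23 b33))))))))))).

Lemma checkall_ok : checkall = true.
Proof. vm_compute. reflexivity. Qed.

Lemma all2P (P : bool -> bool) : all2 P -> forall b, P b.
Proof. by case/andP=> ? ? []. Qed.

Lemma mem_all16 (p : vec) : p \in all16.
Proof. by case: p => [[[[] []] []] []]. Qed.

Lemma finite_main b00 b01 b02 b03 b11 b12 b13 b22 b23 b33 :
  exists b (phi : vec -> vec), forall p q : vec,
   bilf (msym b00 b01 b02 b03 b11 b12 b13 b22 b23 b33) (v4 p) (v4 q) = bilf (Bm b) (v4 (phi p)) (v4 (phi q)).
Proof.
have := checkall_ok; rewrite /checkall.
move=> /all2P/(_ b00)/all2P/(_ b01)/all2P/(_ b02)/all2P/(_ b03)/all2P/(_ b11).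
move=> /all2P/(_ b12)/all2P/(_ b13)/all2P/(_ b22)/all2P/(_ b23)/all2P/(_ b33).
rewrite /checkm; case: search => [[[[[b l0] l1] l2] l3]|] // H.
exists b, (applyL l0 l1 l2 l3) => p q.
have /allP/(_ p (mem_all16 p))/allP/(_ q (mem_all16 q))/eqP := H.
done.
Qed.

Local Open Scope ring_scope.

Lemma natrF2 (n : nat) : (n%:R != 0 :> 'F_2) = odd n.
Proof.
rewrite -(@Fp_nat_mod 2) // modn2; by case: (odd n).
Qed.

Lemma F2E (x : 'F_2) : x = (x != 0)%:R.
Proof.
case: x => [[|[|k]] Hk] //=; apply/val_inj => //=.
Qed.

Lemma sum4 (G : 'I_4 -> 'F_2) :
  \sum_(i < 4) G i = G (inord 0) + G (inord 1) + G (inord 2) + G (inord 3).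
Proof.
rewrite !big_ord_recl big_ord0 addr0 !addrA.
by congr (G _ + G _ + G _ + G _); apply/val_inj; rewrite /= inordK.
Qed.

Lemma bil_bridge (u v : 'rV['F_2]_4) (M : 'M['F_2]_4) :
  ((u *m M *m v^T) 0 0 != 0) =
  bilf (fun i j => M (inord i) (inord j) != 0) (fun i => u 0 (inord i) != 0) (fun i => v 0 (inord i) != 0).
Proof.
rewrite !mxE.
under eq_bigr => j _ do rewrite !mxE mulr_suml.
under eq_bigr => j _ do under eq_bigr => i _ do rewrite [u 0 i]F2E [M i j]F2E [v 0 j]F2E.
rewrite !sum4 -!natrM -!natrD natrF2.
reflexivity.
Qed.

Lemma bil_bridge2 n1 n2 (X : 'M['F_2]_(n1,4)) (Y : 'M['F_2]_(n2,4)) (M : 'M['F_2]_4) j k :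
  ((X *m M *m Y^T) j k != 0) =
  bilf (fun i j => M (inord i) (inord j) != 0) (fun i => X j (inord i) != 0) (fun i => Y k (inord i) != 0).
Proof.
rewrite !mxE.
under eq_bigr => j' _ do rewrite !mxE mulr_suml.
under eq_bigr => j' _ do under eq_bigr => i _ do rewrite [X j i]F2E [M i j']F2E [Y k j']F2E.
rewrite !sum4 -!natrM -!natrD natrF2.
reflexivity.
Qed.

Lemma bilf_ext m m' u u' v v' :
  (forall i j, (i < 4)%N -> (j < 4)%N -> m i j = m' i j) ->
  (forall i, (i < 4)%N -> u i = u' i) -> (forall i, (i < 4)%N -> v i = v' i) ->
  bilf m u v = bilf m' u' v'.
Proof. by move=> Hm Hu Hv; rewrite /bilf /F !Hm // !Hu // !Hv. Qed.

Definition bitsOf (n : nat) : vec :=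
  (odd (n %/ 2 ^ 0), odd (n %/ 2 ^ 1), odd (n %/ 2 ^ 2), odd (n %/ 2 ^ 3)).

Definition code (p : vec) : nat :=
  let '(a,b,c,d) := p in (a + 2 * b + 4 * c + 8 * d)%N.
Definition idx (p : vec) : option 'I_15 :=
  if code p is c.+1 then Some (Ordinal (@ltn_pmod c 15 isT)) else None.

Lemma idx_spec (p : vec) :
  match idx p with Some j => bitsOf j.+1 = p | None => p = vzero end.
Proof.
by case: p => [[[[] []] []] []]; vm_compute.
Qed.

Lemma bilf_zero b q : bilf (Bm b) (v4 vzero) (v4 q) = false /\ bilf (Bm b) (v4 q) (v4 vzero) = false.
Proof. by case: b; case: q => [[[[] []] []] []]; vm_compute. Qed.

Definition hB (b : bool) := if b then F2R4A else F2R4B.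

Lemma B_bits b : forall i j, (i < 4)%N -> (j < 4)%N ->
  ((if b then B1 else B2) (inord i) (inord j) != 0) = Bm b i j.
Proof.
move=> i j Hi Hj.
case: b; rewrite /B1 /B2 !mxE natrF2 oddb -?val_eqE /= !inordK //;
case: i Hi => [|[|[|[|i]]]] // _; case: j Hj => [|[|[|[|j]]]] // _.
Qed.

Lemma F2R4_link b (j k : 'I_15) :
  hB b j k = bilf (Bm b) (v4 (bitsOf j.+1)) (v4 (bitsOf k.+1)).
Proof.
have -> : hB b j k = ((Umx^T *m (if b then B1 else B2) *m Umx^T^T) j k != 0).
  by rewrite trmxK; case: b.
rewrite bil_bridge2; apply: bilf_ext.
- exact: B_bits.
- move=> i Hi; rewrite !mxE natrF2 oddb inordK //.
  by case: i Hi => [|[|[|[|i]]]].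
- move=> i Hi; rewrite !mxE natrF2 oddb inordK //.
  by case: i Hi => [|[|[|[|i]]]].
Qed.

Lemma withK1_link b (p q : vec) :
  withK1 (hB b) (idx p) (idx q) = bilf (Bm b) (v4 p) (v4 q).
Proof.
have := idx_spec p; have := idx_spec q.
case: (idx p) => [j|]; case: (idx q) => [k|] /= Hq Hp.
- by rewrite -Hp -Hq F2R4_link.
- by rewrite Hq (bilf_zero b p).2.
- by rewrite Hp (bilf_zero b q).1.
- by rewrite Hp (bilf_zero b q).1.
Qed.

Lemma sym_factor n (A : 'M['F_2]_n) : A^T = A -> (\rank A <= 4)%N ->
  exists (C : 'M['F_2]_(n,4)) (M : 'M['F_2]_4), M^T = M /\ A = C *m M *m C^T.
Proof.
move=> AT rA.
set L := col_ebase A.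
pose X := L *m (pid_mx 4 : 'M['F_2]_(n,4)).
pose Z := (pid_mx 4 : 'M['F_2]_(4,n)) *m invmx L.
have XZA : X *m Z *m A = A.
  have EA := mulmx_ebase A; rewrite -/L in EA.
  suff : X *m Z *m (L *m pid_mx (\rank A) *m row_ebase A) = L *m pid_mx (\rank A) *m row_ebase A by rewrite EA.
  rewrite /X /Z !mulmxA -[L *m _ *m _]mulmxA mul_pid_mx.
  rewrite -!mulmxA (mulmxA (invmx L)) mulVmx ?col_ebase_unit // mul1mx.
  congr (_ *m _); rewrite mulmxA mul_pid_mx !minnn.
  by rewrite (minn_idPr rA) (minn_idPr (rank_leq_row A)).
clearbody X Z.
exists X, (Z *m A *m Z^T); split.
  by rewrite !trmx_mul trmxK AT mulmxA.
have AZX : A = A *m Z^T *m X^T.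
  by rewrite -{1}AT -{1}XZA !trmx_mul AT mulmxA.
by rewrite -{1}XZA {1}AZX !mulmxA.
Qed.

Lemma mr_le n (g : rel 'I_n) (A : 'M['F_2]_n) : fits g A -> (@mr 'F_2 n g <= \rank A)%N.
Proof.
move=> fA; rewrite /mr -big_filter.
have : A \in [seq i <- index_enum 'M['F_2]_n | fits g i] by rewrite mem_filter fA mem_index_enum.
elim: [seq _ <- _ | _] => [|B s IH] //=.
rewrite big_cons inE => /orP[/eqP <-|/IH H]; first exact: geq_minl.
exact: leq_trans (geq_minr _ _) H.
Qed.

Lemma mr_ex n (g : rel 'I_n) : symmetric g -> irreflexive g -> (@mr 'F_2 n g <= 4)%N ->
  exists A : 'M['F_2]_n, fits g A /\ (\rank A <= 4)%N.
Proof.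
move=> gs gi H.
case: (boolP [exists A : 'M['F_2]_n, fits g A && (\rank A <= 4)%N]).
  by case/existsP=> A /andP[]; exists A.
rewrite negb_exists => /forallP Hall.
have : (4 < @mr 'F_2 n g)%N; last by rewrite ltnNge H.
case: (leqP n 4) => Hn.
  pose Adj : 'M['F_2]_n := \matrix_(i, j) (g i j)%:R.
  have fAdj : fits g Adj.
    apply/andP; split.
      by apply/eqP/matrixP => i j; rewrite !mxE gs.
    by apply/forallP=> i; apply/forallP=> j; apply/implyP=> _; rewrite mxE natrF2 oddb.
  have := Hall Adj; rewrite fAdj /= -ltnNge => H4.
  by have := leq_ltn_trans (leq_trans (rank_leq_row Adj) Hn) H4; rewrite ltnn.
rewrite /mr; apply: (big_ind (fun m => 4 < m)%N) => //.
  by move=> x y Hx Hy; rewrite leq_min Hx Hy.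
by move=> A fA; have := Hall A; rewrite fA /= -ltnNge.
Qed.

Definition tvec n (C : 'M['F_2]_(n,4)) (x : 'I_n) : vec :=
  (C x (inord 0) != 0, C x (inord 1) != 0, C x (inord 2) != 0, C x (inord 3) != 0).

Lemma hB_true : hB true = F2R4A. Proof. by []. Qed.
Lemma hB_false : hB false = F2R4B. Proof. by []. Qed.

Theorem mainTheorem20 (n : nat) (g : rel 'I_n)
  (g_sym : symmetric g) (g_irr : irreflexive g) :
  (@mr 'F_2 n g <= 4)%N <->
  (blowup (withK1 F2R4A) g \/ blowup (withK1 F2R4B) g).
Proof.
split.
- move=> H.
  have [A [/andP[/eqP AT /forallP Aoff] rA]] := mr_ex g_sym g_irr H.
  have [C [M [MT EA]]] := sym_factor AT rA.
  have Ms : forall a c, M a c = M c a.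
    by move=> a c; rewrite -{1}MT mxE.
  pose mb i j := M (inord i) (inord j) != 0.
  have [b [phi Hphi]] := finite_main (mb 0 0) (mb 0 1) (mb 0 2) (mb 0 3) (mb 1 1)
     (mb 1 2) (mb 1 3) (mb 2 2) (mb 2 3) (mb 3 3).
  have key : forall x y : 'I_n, x != y -> g x y = withK1 (hB b) (idx (phi (tvec C x))) (idx (phi (tvec C y))).
    move=> x y Hxy.
    have := Aoff x => /forallP/(_ y); rewrite Hxy /= => /eqP <-.
    rewrite withK1_link -Hphi EA bil_bridge2; apply: bilf_ext.
    + move=> i j Hi Hj; rewrite /mb.
      case: i Hi => [|[|[|[|i]]]] // _; case: j Hj => [|[|[|[|j]]]] //= _; by rewrite Ms.
    + by move=> i; case: i => [|[|[|[|i]]]].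
    + by move=> i; case: i => [|[|[|[|i]]]].
  clear Hphi; case: b key => key; [left | right]; exists (fun x => idx (phi (tvec C x))); exact: key.
- have side : forall b, blowup (withK1 (hB b)) g -> (@mr 'F_2 n g <= 4)%N.
    move=> b [f Hf].
    pose C : 'M['F_2]_(n,4) := \matrix_(x, i) (if f x is Some j then Umx i j else 0).
    pose B := if b then B1 else B2.
    have BT : B^T = B.
      rewrite /B; case: (b).
        by rewrite /B1 tr_scalar_mx.
      by apply/matrixP => i j; rewrite !mxE eq_sym [(j %/ 2 == _)%N]eq_sym.
    pose tv x := if f x is Some j then bitsOf j.+1 else vzero.
    have Ebil : forall x y, ((C *m B *m C^T) x y != 0) = withK1 (hB b) (f x) (f y).
      move=> x y.
      have -> : withK1 (hB b) (f x) (f y) = bilf (Bm b) (v4 (tv x)) (v4 (tv y)).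
        rewrite /tv; case: (f x) => [j|]; case: (f y) => [k|] /=.
        * exact: F2R4_link.
        * by rewrite (bilf_zero b _).2.
        * by rewrite (bilf_zero b _).1.
        * by rewrite (bilf_zero b _).1.
      rewrite bil_bridge2; apply: bilf_ext.
      + by move=> i j Hi Hj; rewrite B_bits.
      + move=> i Hi; rewrite /tv mxE; case: (f x) => [j|].
          rewrite mxE natrF2 oddb inordK //; by case: i Hi => [|[|[|[|i]]]].
        by case: i Hi => [|[|[|[|i]]]].
      + move=> i Hi; rewrite /tv mxE; case: (f y) => [j|].
          rewrite mxE natrF2 oddb inordK //; by case: i Hi => [|[|[|[|i]]]].
        by case: i Hi => [|[|[|[|i]]]].
    have fA : fits g (C *m B *m C^T).
      apply/andP; split.
        by rewrite !trmx_mul trmxK BT mulmxA.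
      apply/forallP=> x; apply/forallP=> y; apply/implyP=> Hxy.
      by rewrite Ebil Hf.
    apply: leq_trans (mr_le fA) _.
    exact: leq_trans (mxrankM_maxl _ _) (rank_leq_col _).
  by case=> [H|H]; [apply: (side true) | apply: (side false)].
Qed.
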